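(* Let $A$ be a monounary algebra. Then there is $B\in\mathbf R(A)\cap\mathcal U^\bigstar_\bigstar$ such that $\mathbf V(A)=\mathbf V(B)$.
   Context: A monounary algebra is a pair $(A,f)$ with $A$ a nonempty set and $f:A\to A$; direct products are coordinatewise. A monounary algebra is connected if for all $x,y$ there are $m,n\ge0$ with $f^m(x)=f^n(y)$; connected components are the maximal connected subalgebras. A retract of $A$ is a nonempty subalgebra $M$ such that there is an endomorphism $h:A\to M$ with $h|_M=\mathrm{id}$. $\mathbf R(A)$ is the class of algebras isomorphic to a retract of $A$. A retract variety is a class closed under isomorphisms, retracts and direct products; $\mathbf V(\mathcal K)$ is the smallest retract variety containing $\mathcal K$. Condition ($\bigstar\bigstar$) on $A$: among any three pairwise isomorphic connected components $C_1,C_2,C_3$ of $A$ at most two are distinct, i.e. $|\{C_1,C_2,C_3\}|\le2$; $\mathcal U^\bigstar_\bigstar$ is the class of monounary algebras satisfying it. *)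

(* Defs.v *)
From mathcomp Require Import all_boot.

Set Implicit Arguments.
Unset Strict Implicit.
Unset Printing Implicit Defensive.

(* Nonemptiness is witnessed by
   an element [pt]; this witness plays no role in homomorphisms,
   isomorphisms, retracts etc. (it only makes nonemptiness constructive). *)
Record Alg : Type := MkAlg {
  carrier :> Type;
  op : carrier -> carrier;
  pt : carrier
}.

Definition hom (A B : Alg) (h : A -> B) : Prop :=
  forall x, h (op x) = op (h x).

Definition iso (A B : Alg) : Prop :=
  exists (h : A -> B) (g : B -> A),
    hom h /\ (forall x, g (h x) = x) /\ (forall y, h (g y) = y).

Definition iso_class (A : Alg) : Alg -> Prop := fun X => iso A X.

Definition closed (A : Alg) (M : A -> Prop) : Prop :=
  forall x, M x -> M (op x).

Definition subalg (A : Alg) (M : A -> Prop) (HM : closed M) (m0 : A)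
  (Hm0 : M m0) : Alg :=
  @MkAlg {x : A | M x}
    (fun x => exist M (op (proj1_sig x)) (HM _ (proj2_sig x)))
    (exist M m0 Hm0).

Definition retract (A : Alg) (M : A -> Prop) : Prop :=
  closed M /\ (exists x, M x) /\
  exists h : A -> A, hom h /\ (forall x, M (h x)) /\ (forall x, M x -> h x = x).

Definition inR (A : Alg) (X : Alg) : Prop :=
  exists (M : A -> Prop) (HM : closed M) (m0 : A) (Hm0 : M m0),
    retract M /\ iso X (subalg HM Hm0).

Definition prodAlg (I : Type) (F : I -> Alg) : Alg :=
  @MkAlg (forall i, F i) (fun x i => op (x i)) (fun i => pt (F i)).

Definition retract_variety (C : Alg -> Prop) : Prop :=
  (forall X Y, iso X Y -> C X -> C Y) /\
  (forall X Y, C X -> inR X Y -> C Y) /\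
  (forall (I : Type) (F : I -> Alg), (forall i, C (F i)) -> C (prodAlg F)).

Definition V (K : Alg -> Prop) : Alg -> Prop :=
  fun X => forall C, retract_variety C -> (forall Y, K Y -> C Y) -> C X.

Definition conn (A : Alg) (x y : A) : Prop :=
  exists m n, iter m (@op A) x = iter n (@op A) y.

Lemma conn_closed (A : Alg) (x : A) : closed (conn x).
Proof.
move=> y [m [n E]]; exists m.+1, n.
by rewrite -iterSr /= E.
Qed.

Lemma conn_refl (A : Alg) (x : A) : conn x x.
Proof. by exists 0, 0. Qed.

Definition component (A : Alg) (x : A) : Alg :=
  subalg (@conn_closed A x) (@conn_refl A x).

Definition same_component (A : Alg) (x y : A) : Prop :=
  forall z, conn x z <-> conn y z.

Definition starstar (A : Alg) : Prop :=
  forall x1 x2 x3 : A,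
    iso (component x1) (component x2) ->
    iso (component x1) (component x3) ->
    iso (component x2) (component x3) ->
    same_component x1 x2 \/ same_component x1 x3 \/ same_component x2 x3.

(* Main.v *)
From Stdlib Require Import ClassicalEpsilon ProofIrrelevance FunctionalExtensionality PropExtensionality.
Require Import Defs.
From mathcomp Require Import all_boot.

Set Implicit Arguments.
Unset Strict Implicit.

Lemma sig_eq (T : Type) (P : T -> Prop) (a b : {x | P x}) :
  proj1_sig a = proj1_sig b -> a = b.
Proof.
case: a => x px; case: b => y py /= E; subst y; f_equal; apply: proof_irrelevance.
Qed.

Lemma pred_eq (T : Type) (P Q : T -> Prop) : (forall x, P x <-> Q x) -> P = Q.
Proof.
move=> H; apply: functional_extensionality => x; apply: propositional_extensionality; exact: H.
Qed.

Lemma conn_sym (X : Alg) (x y : X) : conn x y -> conn y x.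
Proof. by case=> m [n E]; exists n, m. Qed.

Lemma conn_trans (X : Alg) (x y z : X) : conn x y -> conn y z -> conn x z.
Proof.
case=> m [n E] [p [q F]]; exists (p + m), (n + q).
rewrite iterD E -iterD addnC iterD F -iterD; done.
Qed.

Lemma conn_op (X : Alg) (x : X) : conn x (op x).
Proof. by exists 1, 0. Qed.

Lemma conn_opr (X : Alg) (r a : X) : conn r (op a) <-> conn r a.
Proof.
split=> H; first exact: (conn_trans H (conn_sym (conn_op a))).
exact: (conn_trans H (conn_op a)).
Qed.

Lemma conn_eq (X : Alg) (x y : X) : conn x y -> conn x = conn y.
Proof.
move=> H; apply: pred_eq => z; split=> Hz.
- exact: (conn_trans (conn_sym H) Hz).
- exact: (conn_trans H Hz).
Qed.

Lemma sc_of_conn (X : Alg) (x y : X) : conn x y -> same_component x y.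
Proof. by move=> H z; rewrite (conn_eq H). Qed.

Definition isoSpec (X : Alg) (P Q : X -> Prop) (f g : X -> X) : Prop :=
  (forall z, P z -> Q (f z)) /\ (forall z, P z -> f (op z) = op (f z)) /\
  (forall z, Q z -> P (g z)) /\ (forall z, Q z -> g (op z) = op (g z)) /\
  (forall z, P z -> g (f z) = z) /\ (forall z, Q z -> f (g z) = z).

Definition isoP (X : Alg) (P Q : X -> Prop) : Prop := exists f g, isoSpec P Q f g.

Lemma isoP_refl (X : Alg) (P : X -> Prop) : isoP P P.
Proof. by exists (fun z => z), (fun z => z); do !split. Qed.

Lemma isoP_sym (X : Alg) (P Q : X -> Prop) : isoP P Q -> isoP Q P.
Proof.
case=> f [g [h1 [h2 [h3 [h4 [h5 h6]]]]]]; exists g, f; do !split; done.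
Qed.

Lemma isoP_trans (X : Alg) (P Q R : X -> Prop) : isoP P Q -> isoP Q R -> isoP P R.
Proof.
case=> f [g [h1 [h2 [h3 [h4 [h5 h6]]]]]] [f' [g' [k1 [k2 [k3 [k4 [k5 k6]]]]]]].
exists (fun z => f' (f z)), (fun z => g (g' z)); do !split.
- by move=> z Hz; apply: k1; apply: h1.
- by move=> z Hz; rewrite h2 // k2 //; apply: h1.
- by move=> z Hz; apply: h3; apply: k3.
- by move=> z Hz; rewrite k4 // h4 //; apply: k3.
- by move=> z Hz; rewrite k5 ?h5 //; apply: h1.
- by move=> z Hz; rewrite h6 ?k6 //; apply: k3.
Qed.

Definition isoF (X : Alg) (P Q : X -> Prop) : (X -> X) * (X -> X) :=
  epsilon (inhabits ((fun z : X => z), (fun z : X => z))) (fun fg => isoSpec P Q fg.1 fg.2).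

Lemma isoF_spec (X : Alg) (P Q : X -> Prop) :
  isoP P Q -> isoSpec P Q (isoF P Q).1 (isoF P Q).2.
Proof.
case=> f [g H]; rewrite /isoF.
apply: (epsilon_spec (inhabits ((fun z : X => z), (fun z : X => z))) (fun fg : (X -> X) * (X -> X) => isoSpec P Q fg.1 fg.2)).
by exists (f, g).
Qed.

Definition ext (T : Type) (N : T -> Prop) (Y : Type) (h : {z | N z} -> Y) (d : Y) (a : T) : Y :=
  match excluded_middle_informative (N a) with
  | left H => h (exist N a H) | right _ => d end.

Lemma ext_eq (T : Type) (N : T -> Prop) (Y : Type) (h : {z | N z} -> Y) (d : Y) (a : T) (H : N a) :
  ext h d a = h (exist N a H).
Proof.
rewrite /ext; case: excluded_middle_informative => H'; last by [].
by rewrite (proof_irrelevance _ H' H).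
Qed.

Lemma sig_eta (T : Type) (N : T -> Prop) (s : {z | N z}) : exist N (proj1_sig s) (proj2_sig s) = s.
Proof. by case: s. Qed.

Lemma val_iter (X : Alg) (N : X -> Prop) (HN : Defs.closed N) (m0 : X) (Hm : N m0) n
  (s : subalg HN Hm) :
  proj1_sig (iter n (@op (subalg HN Hm)) s) = iter n (@op X) (proj1_sig s).
Proof. by elim: n => //= n ->. Qed.

Lemma conn_sub (X : Alg) (N : X -> Prop) (HN : Defs.closed N) (m0 : X) (Hm : N m0)
  (s1 s2 : subalg HN Hm) : conn s1 s2 <-> conn (proj1_sig s1) (proj1_sig s2).
Proof.
split; case=> m [n E]; exists m, n.
- by have := f_equal (@proj1_sig _ _) E; rewrite !val_iter.
- by apply: sig_eq; rewrite !val_iter.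
Qed.

Lemma iso_comp (X : Alg) (x y : X) :
  iso (component x) (component y) -> isoP (conn x) (conn y).
Proof.
case=> h [g [hh [gh hg]]].
have hg' : hom g.
  move=> b; rewrite -{1}(hg b) -hh; exact: gh.
exists (@ext X (conn x) X (fun s => proj1_sig (h s)) x).
exists (@ext X (conn y) X (fun s => proj1_sig (g s)) y).
do !split.
- by move=> z Hz; rewrite (ext_eq _ _ Hz); exact: proj2_sig.
- move=> z Hz; rewrite (ext_eq _ _ Hz) (ext_eq _ _ (conn_closed Hz)).
  have -> : exist (conn x) (op z) (conn_closed Hz) = @op (component x) (exist _ z Hz) by apply: sig_eq.
  by rewrite hh.
- by move=> z Hz; rewrite (ext_eq _ _ Hz); exact: proj2_sig.
- move=> z Hz; rewrite (ext_eq _ _ Hz) (ext_eq _ _ (conn_closed Hz)).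
  have -> : exist (conn y) (op z) (conn_closed Hz) = @op (component y) (exist _ z Hz) by apply: sig_eq.
  by rewrite hg'.
- move=> z Hz; rewrite (ext_eq _ _ Hz) (ext_eq _ _ (proj2_sig (h _))) sig_eta.
  by rewrite gh.
- move=> z Hz; rewrite (ext_eq _ _ Hz) (ext_eq _ _ (proj2_sig (g _))) sig_eta.
  by rewrite hg.
Qed.

Lemma lift_isoP (X : Alg) (N : X -> Prop) (HN : Defs.closed N) (m0 : X) (Hm : N m0)
  (Ninv : forall a b, conn a b -> N a -> N b) (b1 b2 : subalg HN Hm) :
  isoP (conn b1) (conn b2) -> isoP (conn (proj1_sig b1)) (conn (proj1_sig b2)).
Proof.
case=> f [g [h1 [h2 [h3 [h4 [h5 h6]]]]]].
exists (@ext X N X (fun s => proj1_sig (f s)) m0).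
exists (@ext X N X (fun s => proj1_sig (g s)) m0).
do !split.
- move=> z Hz; have Nz := Ninv _ _ Hz (proj2_sig b1).
  rewrite (ext_eq _ _ Nz); apply/(conn_sub b2 (f _)); apply: h1; exact/conn_sub.
- move=> z Hz; have Nz := Ninv _ _ Hz (proj2_sig b1).
  rewrite (ext_eq _ _ Nz) (ext_eq _ _ (HN _ Nz)).
  have -> : exist N (op z) (HN _ Nz) = @op (subalg HN Hm) (exist _ z Nz) by apply: sig_eq.
  by rewrite h2 //; apply/conn_sub.
- move=> z Hz; have Nz := Ninv _ _ Hz (proj2_sig b2).
  rewrite (ext_eq _ _ Nz); apply/(conn_sub b1 (g _)); apply: h3; exact/conn_sub.
- move=> z Hz; have Nz := Ninv _ _ Hz (proj2_sig b2).
  rewrite (ext_eq _ _ Nz) (ext_eq _ _ (HN _ Nz)).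
  have -> : exist N (op z) (HN _ Nz) = @op (subalg HN Hm) (exist _ z Nz) by apply: sig_eq.
  by rewrite h4 //; apply/conn_sub.
- move=> z Hz; have Nz := Ninv _ _ Hz (proj2_sig b1).
  rewrite (ext_eq _ _ Nz) (ext_eq _ _ (proj2_sig (f _))) sig_eta.
  by rewrite h5 //; apply/conn_sub.
- move=> z Hz; have Nz := Ninv _ _ Hz (proj2_sig b2).
  rewrite (ext_eq _ _ Nz) (ext_eq _ _ (proj2_sig (g _))) sig_eta.
  by rewrite h6 //; apply/conn_sub.
Qed.

Definition clsP (A : Alg) (P : A -> Prop) : A -> Prop := fun y => isoP P (conn y).
Definition rep1 (A : Alg) (c : A -> Prop) : A := epsilon (inhabits (pt A)) c.
Definition rep2 (A : Alg) (c : A -> Prop) : A :=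
  let w := epsilon (inhabits (pt A)) (fun y => c y /\ ~ conn (rep1 c) y) in
  match excluded_middle_informative (c w /\ ~ conn (rep1 c) w) with
  | left _ => w | right _ => rep1 c end.
Definition Mset (A : Alg) (a : A) : Prop :=
  conn a (rep1 (clsP (conn a))) \/ conn a (rep2 (clsP (conn a))).

Lemma L_rep1 (A : Alg) (a : A) : isoP (conn a) (conn (rep1 (clsP (conn a)))).
Proof.
rewrite /rep1; apply: (epsilon_spec (inhabits (pt A)) (clsP (conn a))).
by exists a; apply: isoP_refl.
Qed.

Lemma L_rep2 (A : Alg) (a : A) : isoP (conn a) (conn (rep2 (clsP (conn a)))).
Proof.
rewrite /rep2; case: excluded_middle_informative => [[H _]|_]; first exact: H.
exact: L_rep1.
Qed.

Lemma L_rep2_same (A : Alg) (c : A -> Prop) :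
  conn (rep1 c) (rep2 c) -> forall y, c y -> conn (rep1 c) y.
Proof.
move=> H y Hy; apply: NNPP => Hn.
have Ex : exists y, c y /\ ~ conn (rep1 c) y by exists y.
have := epsilon_spec (inhabits (pt A)) _ Ex.
move: H; rewrite /rep2; case: excluded_middle_informative => //= _ H [_ H'].
exact: H' H.
Qed.

Lemma L_cls_eq (A : Alg) (a b : A) :
  isoP (conn a) (conn b) -> clsP (conn a) = clsP (conn b).
Proof.
move=> H; apply: pred_eq => y; rewrite /clsP; split=> H'.
- exact: isoP_trans (isoP_sym H) H'.
- exact: isoP_trans H H'.
Qed.

Lemma L_in_rep1 (A : Alg) (a z : A) :
  conn (rep1 (clsP (conn a))) z -> clsP (conn z) = clsP (conn a).
Proof.
move=> H; rewrite -(conn_eq H); apply: L_cls_eq; apply: isoP_sym; exact: L_rep1.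
Qed.

Lemma L_in_rep2 (A : Alg) (a z : A) :
  conn (rep2 (clsP (conn a))) z -> clsP (conn z) = clsP (conn a).
Proof.
move=> H; rewrite -(conn_eq H); apply: L_cls_eq; apply: isoP_sym; exact: L_rep2.
Qed.

Lemma M_inv (A : Alg) (a b : A) : conn a b -> Mset a -> Mset b.
Proof.
move=> H; rewrite /Mset -(conn_eq H) => [[H1|H1]].
- by left.
- by right.
Qed.

Lemma M_closed (A : Alg) : Defs.closed (@Mset A).
Proof. move=> a; apply: M_inv; exact: conn_op. Qed.

Lemma M_of_rep1 (A : Alg) (a z : A) : conn (rep1 (clsP (conn a))) z -> Mset z.
Proof. move=> H; rewrite /Mset (L_in_rep1 H); left; exact: conn_sym. Qed.

Lemma M_of_rep2 (A : Alg) (a z : A) : conn (rep2 (clsP (conn a))) z -> Mset z.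
Proof. move=> H; rewrite /Mset (L_in_rep2 H); right; exact: conn_sym. Qed.

Lemma M_m0 (A : Alg) : Mset (rep1 (clsP (conn (pt A)))).
Proof. apply: (@M_of_rep1 A (pt A)); exact: conn_refl. Qed.

Definition Bsub (A : Alg) : Alg := subalg (@M_closed A) (@M_m0 A).

Definition retr (A : Alg) (a : A) : A :=
  match excluded_middle_informative (Mset a) with
  | left _ => a | right _ => (isoF (conn a) (conn (rep1 (clsP (conn a))))).1 a end.

Lemma retr_retract (A : Alg) : retract (@Mset A).
Proof.
split; first exact: M_closed.
split; first by exists (rep1 (clsP (conn (pt A)))); exact: M_m0.
exists (@retr A); split; [|split].
- move=> a; rewrite /retr.
  case: excluded_middle_informative => H1; case: excluded_middle_informative => H2 //.
  + by case: H2; exact: (M_inv (conn_sym (conn_op a)) H1).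
  + by case: H1; exact: (M_closed H2).
  + rewrite (conn_eq (conn_sym (conn_op a))).
    have [_ [h2 _]] := isoF_spec (L_rep1 a).
    by apply: h2; exact: conn_refl.
- move=> a; rewrite /retr; case: excluded_middle_informative => // _.
  have [h1 _] := isoF_spec (L_rep1 a).
  apply: (@M_of_rep1 A a); apply: h1; exact: conn_refl.
- by move=> a Ha; rewrite /retr; case: excluded_middle_informative.
Qed.

Lemma iso_refl (X : Alg) : iso X X.
Proof. by exists (fun z => z), (fun z => z). Qed.

Lemma inR_B (A : Alg) : inR A (Bsub A).
Proof.
exists (@Mset A), (@M_closed A), _, (@M_m0 A); split; first exact: retr_retract.
exact: iso_refl.
Qed.

Lemma starstar_B (A : Alg) : starstar (Bsub A).
Proof.
move=> x1 x2 x3 I12 I13 I23.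
have J12 := lift_isoP (@M_inv A) (iso_comp I12).
have J13 := lift_isoP (@M_inv A) (iso_comp I13).
move: (proj2_sig x1) (proj2_sig x2) (proj2_sig x3).
rewrite /Mset -(L_cls_eq J12) -(L_cls_eq J13).
set r1 := rep1 _; set r2 := rep2 _.
have C : forall (u v : Bsub A) r, conn (proj1_sig u) r -> conn (proj1_sig v) r ->
  same_component u v.
  move=> u v r Hu Hv; apply: sc_of_conn; apply/conn_sub.
  exact: conn_trans Hu (conn_sym Hv).
case=> H1; case=> H2; case=> H3;
  first [by left; exact: C H1 H2 | by right; left; exact: C H1 H3
        | by right; right; exact: C H2 H3].
Qed.

Lemma inR_of_section (X Y : Alg) (e : Y -> X) (r : X -> Y) :
  hom e -> hom r -> (forall y, r (e y) = y) -> inR X Y.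
Proof.
move=> he hr re.
pose N := fun x : X => exists y, x = e y.
have HN : Defs.closed N by move=> x [y ->]; exists (op y); rewrite he.
have Hm : N (e (pt Y)) by exists (pt Y).
exists N, HN, _, Hm; split.
- split; first exact: HN.
  split; first by exists (e (pt Y)).
  exists (fun x => e (r x)); split; [|split].
  + by move=> x; rewrite hr he.
  + by move=> x; exists (r x).
  + by move=> x [y ->]; rewrite re.
- exists (fun y => exist N (e y) (ex_intro _ y erefl)).
  exists (fun s => r (proj1_sig s)); split; [|split].
  + by move=> y; apply: sig_eq => /=; rewrite he.
  + by move=> y /=; rewrite re.
  + by case=> x [y Hy]; apply: sig_eq => /=; rewrite Hy re.
Qed.

Lemma V_of_inR (X Y : Alg) : inR X Y -> forall Z, V (iso_class Y) Z -> V (iso_class X) Z.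
Proof.
move=> HXY Z HZ C HC HK; apply: HZ => // W HW.
case: HC => [Hiso [HR Hprod]].
apply: (Hiso Y W HW); apply: (HR X Y) => //; apply: HK; exact: iso_refl.
Qed.

Lemma V_of_inR_prod (X Y : Alg) (I : Type) :
  inR (prodAlg (fun _ : I => X)) Y -> forall Z, V (iso_class Y) Z -> V (iso_class X) Z.
Proof.
move=> HXY Z HZ C HC HK; apply: HZ => // W HW.
case: HC => [Hiso [HR Hprod]].
apply: (Hiso Y W HW); apply: (HR _ Y _ HXY).
apply: Hprod => _; apply: HK; exact: iso_refl.
Qed.

Definition toB (A : Alg) (a : A) : Bsub A :=
  @ext A (@Mset A) (Bsub A) (fun s => s) (pt (Bsub A)) a.

Lemma toB_val (A : Alg) (a : A) : Mset a -> proj1_sig (toB a) = a.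
Proof. by move=> H; rewrite /toB (ext_eq _ _ H). Qed.

Lemma toB_op (A : Alg) (a : A) : Mset a -> toB (op a) = op (toB a).
Proof.
move=> H; apply: sig_eq; rewrite toB_val; last exact: M_closed.
by rewrite /= toB_val.
Qed.

Definition phi1 (A : Alg) (P : A -> Prop) := (isoF P (conn (rep1 (clsP P)))).1.
Definition phi2 (A : Alg) (P : A -> Prop) := (isoF P (conn (rep2 (clsP P)))).1.

Definition PB (A : Alg) := prodAlg (fun _ : A -> Prop => Bsub A).

Definition emb (A : Alg) (y : A) : PB A := fun i =>
  toB (match excluded_middle_informative (i = conn y) with
       | left _ => phi2 (conn y) y | right _ => phi1 (conn y) y end).

Definition i0 (A : Alg) : A -> Prop := fun _ => False.

Definition zz (A : Alg) (x : PB A) : A := proj1_sig (x (@i0 A)).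
Definition cc (A : Alg) (x : PB A) : A -> Prop := clsP (conn (zz x)).
Definition QQ (A : Alg) (x : PB A) (P : A -> Prop) : Prop :=
  (exists w, P = conn w /\ clsP (conn w) = cc x) /\
  conn (rep2 (cc x)) (proj1_sig (x P)) /\ ~ conn (rep1 (cc x)) (proj1_sig (x P)).
Definition selP (A : Alg) (x : PB A) : A -> Prop :=
  match excluded_middle_informative (exists P, QQ x P) with
  | left _ => epsilon (inhabits (@i0 A)) (QQ x) | right _ => conn (rep1 (cc x)) end.
Definition rho (A : Alg) (x : PB A) : A :=
  match excluded_middle_informative (conn (rep1 (cc x)) (zz x)) with
  | left _ => (isoF (selP x) (conn (rep1 (cc x)))).2 (zz x)
  | right _ => (isoF (selP x) (conn (rep2 (cc x)))).2 (zz x) end.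

Lemma emb_hom (A : Alg) : hom (@emb A).
Proof.
move=> y; apply: functional_extensionality => i.
rewrite /emb (conn_eq (conn_sym (conn_op y))) /=.
case: excluded_middle_informative => _.
- have [h1 [h2 _]] := isoF_spec (L_rep2 y).
  rewrite /phi2 h2 ?toB_op //; last exact: conn_refl.
  apply: (@M_of_rep2 A y); apply: h1; exact: conn_refl.
- have [h1 [h2 _]] := isoF_spec (L_rep1 y).
  rewrite /phi1 h2 ?toB_op //; last exact: conn_refl.
  apply: (@M_of_rep1 A y); apply: h1; exact: conn_refl.
Qed.

Lemma zz_op (A : Alg) (x : PB A) : zz (op x) = op (zz x).
Proof. by []. Qed.

Lemma cc_op (A : Alg) (x : PB A) : cc (op x) = cc x.
Proof. by rewrite /cc zz_op (conn_eq (conn_sym (conn_op (zz x)))). Qed.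

Lemma QQ_op (A : Alg) (x : PB A) : QQ (op x) = QQ x.
Proof.
apply: pred_eq => P; rewrite /QQ cc_op /=.
by rewrite !conn_opr.
Qed.

Lemma selP_op (A : Alg) (x : PB A) : selP (op x) = selP x.
Proof. by rewrite /selP QQ_op cc_op. Qed.

Lemma cc_rep1 (A : Alg) (x : PB A) : isoP (conn (zz x)) (conn (rep1 (cc x))).
Proof. exact: L_rep1. Qed.
Lemma cc_rep2 (A : Alg) (x : PB A) : isoP (conn (zz x)) (conn (rep2 (cc x))).
Proof. exact: L_rep2. Qed.

Lemma selP_iso (A : Alg) (x : PB A) :
  isoP (selP x) (conn (zz x)).
Proof.
rewrite /selP; case: excluded_middle_informative => [Ex|_].
- have [[w [-> E]] _] := epsilon_spec (inhabits (@i0 A)) _ Ex.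
  have := L_rep1 w; rewrite E => H.
  exact: isoP_trans H (isoP_sym (cc_rep1 x)).
- exact: isoP_sym (cc_rep1 x).
Qed.

Lemma conn_opE (A : Alg) (r a : A) : conn r (op a) = conn r a.
Proof. apply: propositional_extensionality; exact: conn_opr. Qed.

Lemma rho_hom (A : Alg) : hom (@rho A).
Proof.
move=> x; rewrite /rho zz_op cc_op selP_op conn_opE.
have Mz : Mset (zz x) := proj2_sig (x (@i0 A)).
case: excluded_middle_informative => H.
- have [_ [_ [_ [h4 _]]]] := isoF_spec (isoP_trans (selP_iso x) (cc_rep1 x)).
  exact: h4.
- have [_ [_ [_ [h4 _]]]] := isoF_spec (isoP_trans (selP_iso x) (cc_rep2 x)).
  apply: h4; case: Mz => Hz; first by case: H; exact: conn_sym.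
  exact: conn_sym.
Qed.

Lemma i0_neq (A : Alg) (y : A) : @i0 A <> conn y.
Proof. by move=> E; have := conn_refl y; rewrite -E. Qed.

Lemma rho_emb (A : Alg) (y : A) : rho (emb y) = y.
Proof.
have [k1 [k2 [k3 [k4 [k5 k6]]]]] := isoF_spec (L_rep1 y).
have [l1 [l2 [l3 [l4 [l5 l6]]]]] := isoF_spec (L_rep2 y).
have Hy := conn_refl y.
have Ez : zz (emb y) = phi1 (conn y) y.
  rewrite /zz /emb; case: excluded_middle_informative => E; first by case: (i0_neq E).
  rewrite toB_val //; apply: (@M_of_rep1 A y); exact: k1.
have Ec : cc (emb y) = clsP (conn y).
  by rewrite /cc Ez; apply: L_in_rep1; exact: k1.
have Es : selP (emb y) = conn y.
  rewrite /selP; case: excluded_middle_informative => Ex.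
  - have [[w [Ew Ecw]] [Q2 Q3]] := epsilon_spec (inhabits (@i0 A)) _ Ex.
    set P := epsilon _ _ in Ew Q2 Q3 *.
    apply: NNPP => NE; apply: Q3.
    rewrite /emb Ec; case: excluded_middle_informative => E; first by case: NE.
    rewrite toB_val; last by apply: (@M_of_rep1 A y); exact: k1.
    exact: k1.
  - rewrite Ec.
    have R12 : conn (rep1 (clsP (conn y))) (rep2 (clsP (conn y))).
      apply: NNPP => N12; apply: Ex; exists (conn y); split; first by exists y; rewrite Ec.
      rewrite /emb Ec; case: excluded_middle_informative => // _.
      rewrite toB_val; last by apply: (@M_of_rep2 A y); exact: l1.
      split; first exact: l1.
      move=> C; apply: N12; exact: conn_trans C (conn_sym (l1 _ Hy)).
    apply: conn_eq; apply: (L_rep2_same R12); exact: isoP_refl.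
rewrite /rho Es Ec Ez.
case: excluded_middle_informative => H; first by apply: k5.
by case: H; exact: k1.
Qed.

Theorem lemma5p1 (A : Alg) :
  exists B : Alg, inR A B /\ starstar B /\
    (forall X : Alg, V (iso_class A) X <-> V (iso_class B) X).
Proof.
exists (Bsub A); split; first exact: inR_B.
split; first exact: starstar_B.
move=> X; split.
- apply: (@V_of_inR_prod (Bsub A) A (A -> Prop)).
  exact: (inR_of_section (@emb_hom A) (@rho_hom A) (@rho_emb A)).
- exact: V_of_inR (inR_B A) X.
Qed.
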